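(* There is a uniform algorithm that, on input of a countably generated recursive presentation $P = \langle X \mid R\rangle$ and a recursively enumerable set of integers $A$, outputs a countably generated recursive presentation $P^{A-\mathrm{tf}} = \langle X \mid R'\rangle$ on the same generating set $X$, with $R \subseteq R'$ as sets, such that $\overline{P^{A-\mathrm{tf}}} \cong \overline{P}^{A-\mathrm{tf}}$, the associated surjection $\overline{P} \to \overline{P^{A-\mathrm{tf}}}$ being the one induced by the identity map on $X$.
   Context: A countably generated recursive presentation $\langle X \mid R\rangle$ is a group presentation where $X$ is a recursively enumerated set of generators and $R$ is a recursive enumeration of relators; $\overline{P}$ denotes the group presented by $P$. For a group $G$ and set of integers $A$, $\mathrm{Tor}^{A}(G) := \{ g \in G \mid \exists n \in A,\ g^{n} = e\}$, and $G$ is $A$-torsion-free if $\mathrm{Tor}^{A}(G)=\{e\}$. $G^{A-\mathrm{tf}}$ denotes the universal $A$-torsion-free quotient of $G$: an $A$-torsion-free group $H$ with a surjection $h: G \to H$ such that every homomorphism $f$ from $G$ to an $A$-torsion-free group $K$ factors as $f = \phi\circ h$ for some homomorphism $\phi: H\to K$ (unique up to isomorphism). *)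

(* Defs.v *)
From HB Require Import structures.
From mathcomp Require Import all_boot all_algebra.
Set Implicit Arguments. Unset Strict Implicit. Unset Printing Implicit Defensive.

(*    (Kleene's mu-recursive functions; oracle j is the unary function     *)
(*    o j : nat -> nat.)  Data are coded into nat via MathComp's pickle.   *)

Inductive prog : Type :=
| PZero
| PSucc
| PProj (i : nat)
| POracle (j : nat)
| PComp (f : prog) (gs : seq prog)
| PRec (f g : prog)
| PMu (f : prog).

Inductive peval (o : nat -> nat -> nat) : prog -> seq nat -> nat -> Prop :=
| ev_zero a : peval o PZero a 0
| ev_succ a : peval o PSucc a (nth 0 a 0).+1
| ev_proj i a : peval o (PProj i) a (nth 0 a i)
| ev_oracle j a : peval o (POracle j) a (o j (nth 0 a 0))
| ev_comp f gs a ys y :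
    pevals o gs a ys -> peval o f ys y -> peval o (PComp f gs) a y
| ev_rec0 f g a y : peval o f a y -> peval o (PRec f g) (0 :: a) y
| ev_recS f g k a z y :
    peval o (PRec f g) (k :: a) z -> peval o g (k :: z :: a) y ->
    peval o (PRec f g) (k.+1 :: a) y
| ev_mu f a y :
    peval o f (y :: a) 0 ->
    (forall k, k < y -> exists2 v, 0 < v & peval o f (k :: a) v) ->
    peval o (PMu f) a y
with pevals (o : nat -> nat -> nat) : seq prog -> seq nat -> seq nat -> Prop :=
| evs_nil a : pevals o [::] a [::]
| evs_cons g gs a y ys :
    peval o g a y -> pevals o gs a ys -> pevals o (g :: gs) a (y :: ys).

Definition no_oracle : nat -> nat -> nat := fun _ _ => 0.

Definition computable (f : nat -> nat) : Prop :=
  exists p : prog, forall n, peval no_oracle p [:: n] (f n).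

(* set enumerated by a (possibly finite / empty) enumeration *)
Definition enum_set (T : Type) (e : nat -> option T) : T -> Prop :=
  fun x => exists n, e n = Some x.

(* letter (x, false) = generator x, (x, true) = x^-1 *)
Definition letter := (nat * bool)%type.
Definition word := seq letter.

Definition winv (w : word) : word := rev (map (fun l : letter => (l.1, ~~ l.2)) w).

Definition onX (X : nat -> Prop) (w : word) : Prop := forall l, l \in w -> X l.1.

(* the congruence "equal in <gens | R>": free reduction + normal closure of R *)
Inductive wcong (R : word -> Prop) : word -> word -> Prop :=
| wc_refl w : wcong R w w
| wc_sym u v : wcong R u v -> wcong R v u
| wc_trans u v w : wcong R u v -> wcong R v w -> wcong R u w
| wc_cat u u' v v' : wcong R u u' -> wcong R v v' -> wcong R (u ++ v) (u' ++ v')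
| wc_free x b : wcong R [:: (x, b); (x, ~~ b)] [::]
| wc_rel r : R r -> wcong R r [::].

(* groups, presented as setoids (carrier + equality of group elements) *)
Record sgroup := SGroup {
  gcar :> Type;
  geq : gcar -> gcar -> Prop;
  gmul : gcar -> gcar -> gcar;
  ginv : gcar -> gcar;
  gone : gcar;
  geq_refl : forall x, geq x x;
  geq_sym : forall x y, geq x y -> geq y x;
  geq_trans : forall x y z, geq x y -> geq y z -> geq x z;
  gmul_compat : forall x x' y y', geq x x' -> geq y y' -> geq (gmul x y) (gmul x' y');
  ginv_compat : forall x x', geq x x' -> geq (ginv x) (ginv x');
  gmulA : forall x y z, geq (gmul x (gmul y z)) (gmul (gmul x y) z);
  gmul1g : forall x, geq (gmul gone x) x;
  gmulVg : forall x, geq (gmul (ginv x) x) gone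
}.

Arguments geq {s}.
Arguments gmul {s}.
Arguments ginv {s}.
Arguments gone {s}.

Section PresGroup.
Variables (X : nat -> Prop) (R : word -> Prop).

Lemma onX_cat u v : onX X u -> onX X v -> onX X (u ++ v).
Proof. by move=> hu hv l; rewrite mem_cat => /orP [] ?; [apply: hu | apply: hv]. Qed.

Lemma onX_winv u : onX X u -> onX X (winv u).
Proof.
move=> hu l; rewrite /winv mem_rev => /mapP [l' Hl' ->] /=; exact: hu.
Qed.

Lemma onX_nil : onX X [::].
Proof. by []. Qed.

Lemma winv_cat u v : winv (u ++ v) = winv v ++ winv u.
Proof. by rewrite /winv map_cat rev_cat. Qed.

Lemma winv_cancel w : wcong R (winv w ++ w) [::].
Proof.
elim: w => [|[x b] w IH]; first exact: wc_refl.
have -> : winv ((x, b) :: w) ++ (x, b) :: w =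
          winv w ++ ([:: (x, ~~ b); (x, ~~ ~~ b)] ++ w).
  by rewrite -cat1s winv_cat /winv /= -catA /= negbK.
apply: wc_trans IH.
have := @wc_cat R (winv w) (winv w) ([:: (x, ~~ b); (x, ~~ ~~ b)] ++ w) ([::] ++ w)
  (wc_refl R _) (wc_cat (wc_free R x (~~ b)) (wc_refl R w)).
by rewrite cat0s.
Qed.

Lemma wcong_winv u v : wcong R u v -> wcong R (winv u) (winv v).
Proof.
elim=> {u v}.
- move=> w; exact: wc_refl.
- move=> u v _ IH; exact: wc_sym.
- move=> u v w _ IH1 _ IH2; exact: wc_trans IH2.
- move=> u u' v v' _ IH1 _ IH2; rewrite !winv_cat; exact: wc_cat.
- move=> x b; rewrite /winv /= /rev /= negbK.
  exact: wc_free.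
- move=> r Hr.
  apply: (@wc_trans _ _ (winv r ++ r)); last exact: winv_cancel.
  rewrite -[X in wcong _ X _]cats0.
  apply: wc_cat; [exact: wc_refl | apply: wc_sym; exact: wc_rel].
Qed.

Definition pelem := {w : word | onX X w}.

Definition pmul (u v : pelem) : pelem :=
  exist _ (sval u ++ sval v) (onX_cat (svalP u) (svalP v)).
Definition pinv (u : pelem) : pelem := exist _ (winv (sval u)) (onX_winv (svalP u)).
Definition pone : pelem := exist _ [::] onX_nil.
Definition peq (u v : pelem) : Prop := wcong R (sval u) (sval v).

Definition Pres : sgroup.
Proof.
refine (@SGroup pelem peq pmul pinv pone _ _ _ _ _ _ _ _); rewrite /peq /=.
- move=> x; exact: wc_refl.
- move=> x y; exact: wc_sym.
- move=> x y z; exact: wc_trans.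
- move=> x x' y y'; exact: wc_cat.
- move=> x x'; exact: wcong_winv.
- move=> x y z; rewrite catA; exact: wc_refl.
- move=> x; exact: wc_refl.
- move=> x; exact: winv_cancel.
Defined.

End PresGroup.

Definition gexpn (G : sgroup) (g : G) (k : nat) : G := iter k (gmul g) gone.

Definition gpowz (G : sgroup) (g : G) (z : int) : G :=
  match z with
  | Posz k => gexpn g k
  | Negz k => ginv (gexpn g k.+1)
  end.

Definition A_torsion_free (A : int -> Prop) (G : sgroup) : Prop :=
  forall (g : G) (n : int), A n -> geq (gpowz g n) gone -> geq g gone.

Definition is_hom (G H : sgroup) (f : G -> H) : Prop :=
  (forall x y, geq x y -> geq (f x) (f y)) /\
  (forall x y, geq (f (gmul x y)) (gmul (f x) (f y))).

Definition is_surj (G H : sgroup) (f : G -> H) : Prop :=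
  forall y : H, exists x : G, geq (f x) y.

Definition is_univ_A_tf_quotient (A : int -> Prop) (G H : sgroup) (h : G -> H) : Prop :=
  A_torsion_free A H /\ is_hom h /\ is_surj h /\
  forall (K : sgroup) (f : G -> K), A_torsion_free A K -> is_hom f ->
    exists phi : H -> K, is_hom phi /\ forall g : G, geq (f g) (phi (h g)).

Definition input_oracle (eX : nat -> option nat) (eR : nat -> option word)
  (eA : nat -> option int) : nat -> nat -> nat :=
  fun j n => match j with
             | 0 => pickle (eX n)
             | 1 => pickle (eR n)
             | 2 => pickle (eA n)
             | _ => 0
             end.

Arguments is_univ_A_tf_quotient A G H h : clear implicits.

(* Main.v *)
Require Import Defs.
From HB Require Import structures.
From mathcomp Require Import all_boot all_algebra.
From mathcomp Require Import zify.
From Stdlib Require ClassicalDescription.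
Set Implicit Arguments. Unset Strict Implicit. Unset Printing Implicit Defensive.

Inductive ex : Type :=
| EVar (i : nat) | EZero | ESucc (e : ex) | EOrc (j : nat) (e : ex)
| ELet (e1 e2 : ex) | ERec (c b s : ex)
| EApp1 (f e1 : ex) | EApp2 (f e1 e2 : ex) | EApp3 (f e1 e2 e3 : ex).

Fixpoint prec (b : nat) (s : nat -> nat -> nat) (k : nat) : nat :=
  if k is k'.+1 then s k' (prec b s k') else b.

Lemma prec_ext b1 b2 s1 s2 k : b1 = b2 -> (forall k z, s1 k z = s2 k z) ->
  prec b1 s1 k = prec b2 s2 k.
Proof. by move=> -> H; elim: k => //= k ->. Qed.

Section Eval.
Variable o : nat -> nat -> nat.

Fixpoint eval (e : ex) (env : seq nat) {struct e} : nat :=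
  match e with
  | EVar i => nth 0 env i
  | EZero => 0
  | ESucc e => (eval e env).+1
  | EOrc j e => o j (eval e env)
  | ELet e1 e2 => eval e2 (eval e1 env :: env)
  | ERec c b s =>
      let fix go k := if k is k'.+1 then eval s (k' :: go k' :: env) else eval b env
      in go (eval c env)
  | EApp1 f e1 => eval f [:: eval e1 env]
  | EApp2 f e1 e2 => eval f [:: eval e1 env; eval e2 env]
  | EApp3 f e1 e2 e3 => eval f [:: eval e1 env; eval e2 env; eval e3 env]
  end.

Lemma eval_rec c b s env : eval (ERec c b s) env =
  prec (eval b env) (fun k z => eval s (k :: z :: env)) (eval c env).
Proof. by rewrite /=; elim: (eval c env) => //= k ->. Qed.

Definition tk n (a : seq nat) := mkseq (nth 0 a) n.
Definition ids n := mkseq PProj n.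

Fixpoint compile (n : nat) (e : ex) : prog :=
  match e with
  | EVar i => if i < n then PProj i else PZero
  | EZero => PZero
  | ESucc e => PComp PSucc [:: compile n e]
  | EOrc j e => PComp (POracle j) [:: compile n e]
  | ELet e1 e2 => PComp (compile n.+1 e2) (compile n e1 :: ids n)
  | ERec c b s => PComp (PRec (compile n b) (compile n.+2 s)) (compile n c :: ids n)
  | EApp1 f e1 => PComp (compile 1 f) [:: compile n e1]
  | EApp2 f e1 e2 => PComp (compile 2 f) [:: compile n e1; compile n e2]
  | EApp3 f e1 e2 e3 => PComp (compile 3 f) [:: compile n e1; compile n e2; compile n e3]
  end.

Lemma pevals_ids n a : pevals o (ids n) a (tk n a).
Proof.
rewrite /ids /tk /mkseq.
suff H : forall m, pevals o [seq PProj i | i <- iota m n] a [seq nth 0 a i | i <- iota m n] by apply: H.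
elim: n => [|n IH] m /=; first exact: evs_nil.
apply: evs_cons; [exact: ev_proj | exact: IH].
Qed.

Lemma tk_size n a : size a = n -> tk n a = a.
Proof. by move=> <-; rewrite /tk mkseq_nth. Qed.

Lemma size_tk n a : size (tk n a) = n.
Proof. by rewrite size_mkseq. Qed.

Theorem compile_ok e n a : peval o (compile n e) a (eval e (tk n a)).
Proof.
elim: e n a.
- move=> i n a /=; rewrite /tk; case: ltnP => H.
    by rewrite nth_mkseq //; apply: ev_proj.
  by rewrite nth_default ?size_mkseq //; apply: ev_zero.
- move=> n a; exact: ev_zero.
- move=> e IH n a /=; apply: (@ev_comp _ _ _ _ [:: eval e (tk n a)]).
    by apply: evs_cons; [apply: IH | apply: evs_nil].
  exact: ev_succ.
- move=> j e IH n a /=; apply: (@ev_comp _ _ _ _ [:: eval e (tk n a)]).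
    by apply: evs_cons; [apply: IH | apply: evs_nil].
  exact: ev_oracle.
- move=> e1 IH1 e2 IH2 n a /=.
  apply: (@ev_comp _ _ _ _ (eval e1 (tk n a) :: tk n a)).
    by apply: evs_cons; [apply: IH1 | apply: pevals_ids].
  have := IH2 n.+1 (eval e1 (tk n a) :: tk n a).
  by rewrite [tk n.+1 _]tk_size // /= size_tk.
- move=> c IHc b IHb s IHs n a; rewrite eval_rec /=.
  apply: (@ev_comp _ _ _ _ (eval c (tk n a) :: tk n a)).
    by apply: evs_cons; [apply: IHc | apply: pevals_ids].
  elim: (eval c (tk n a)) => [|k IHk] /=.
    apply: ev_rec0; have := IHb n (tk n a); by rewrite [tk n (tk n a)]tk_size // size_tk.
  apply: ev_recS; first exact: IHk.
  have := IHs n.+2 [:: k, prec (eval b (tk n a))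
             (fun k0 z : nat => eval s [:: k0, z & tk n a]) k & tk n a].
  by rewrite [tk n.+2 _]tk_size // /= size_tk.
- move=> f IHf e1 IH1 n a /=.
  apply: (@ev_comp _ _ _ _ [:: eval e1 (tk n a)]).
    by apply: evs_cons; [apply: IH1 | apply: evs_nil].
  by have := IHf 1 [:: eval e1 (tk n a)]; rewrite [tk 1 _]tk_size.
- move=> f IHf e1 IH1 e2 IH2 n a /=.
  apply: (@ev_comp _ _ _ _ [:: eval e1 (tk n a); eval e2 (tk n a)]).
    by apply: evs_cons; [apply: IH1 | apply: evs_cons; [apply: IH2|apply: evs_nil]].
  by have := IHf 2 [:: eval e1 (tk n a); eval e2 (tk n a)]; rewrite [tk 2 _]tk_size.
- move=> f IHf e1 IH1 e2 IH2 e3 IH3 n a /=.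
  apply: (@ev_comp _ _ _ _ [:: eval e1 (tk n a); eval e2 (tk n a); eval e3 (tk n a)]).
    apply: evs_cons; [apply: IH1 | apply: evs_cons; [apply: IH2|]].
    by apply: evs_cons; [apply: IH3|apply: evs_nil].
  by have := IHf 3 [:: eval e1 (tk n a); eval e2 (tk n a); eval e3 (tk n a)]; rewrite [tk 3 _]tk_size.
Qed.

End Eval.

Fixpoint shift (c : nat) (e : ex) : ex :=
  match e with
  | EVar i => EVar (if i < c then i else i.+1)
  | EZero => EZero
  | ESucc e => ESucc (shift c e)
  | EOrc j e => EOrc j (shift c e)
  | ELet e1 e2 => ELet (shift c e1) (shift c.+1 e2)
  | ERec c0 b s => ERec (shift c c0) (shift c b) (shift c.+2 s)
  | EApp1 f e1 => EApp1 f (shift c e1)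
  | EApp2 f e1 e2 => EApp2 f (shift c e1) (shift c e2)
  | EApp3 f e1 e2 e3 => EApp3 f (shift c e1) (shift c e2) (shift c e3)
  end.

Section Lib.
Variable o : nat -> nat -> nat.
Local Notation eval := (eval o).

Lemma eval_shift e c env z : c <= size env ->
  eval (shift c e) (take c env ++ z :: drop c env) = eval e env.
Proof.
elim: e c env.
- move=> i c env Hc /=; case: ltnP => H.
    by rewrite nth_cat size_takel // H nth_take.
  by rewrite nth_cat size_takel // ltnNge (leqW H) /= subSn //= (nth_drop c 0 env) subnKC.
- by [].
- by move=> e IH c env Hc /=; rewrite IH.
- by move=> j e IH c env Hc /=; rewrite IH.
- move=> e1 IH1 e2 IH2 c env Hc /=; rewrite IH1 //.
  exact: (IH2 c.+1 (_ :: env)).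
- move=> c0 IHc b IHb s IHs c env Hc; rewrite !eval_rec IHc // IHb //.
  apply: prec_ext => // k z0; exact: (IHs c.+2 [:: k, z0 & env]).
- by move=> f _ e1 IH1 c env Hc /=; rewrite IH1.
- by move=> f _ e1 IH1 e2 IH2 c env Hc /=; rewrite IH1 // IH2.
- by move=> f _ e1 IH1 e2 IH2 e3 IH3 c env Hc /=; rewrite IH1 // IH2 // IH3.
Qed.

Lemma eval_shift1 e k z env : eval (shift 1 e) [:: k, z & env] = eval e (k :: env).
Proof. have := (eval_shift e z (c:=1) (env:=k::env)). move/(_ isT). by rewrite /= take0 drop0. Qed.

End Lib.

Notation V0 := (EVar 0).
Notation V1 := (EVar 1).
Notation V2 := (EVar 2).
Notation V3 := (EVar 3).

Fixpoint cst (m : nat) : ex := if m is m'.+1 then ESucc (cst m') else EZero.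

Definition pred_e := locked (ERec V0 EZero V0).
Definition add_e := locked (ERec V0 V1 (ESucc V1)).
Definition sub_e := locked (ERec V1 V0 (EApp1 pred_e V1)).
Definition mul_e := locked (ERec V0 EZero (EApp2 add_e V1 V3)).
Definition pow2_e := locked (ERec V0 (cst 1) (EApp2 add_e V1 V1)).
Definition sg_e := locked (ERec V0 EZero (cst 1)).
Definition nz_e := locked (ERec V0 (cst 1) EZero).
Definition eqn_e := locked (EApp1 nz_e (EApp2 add_e (EApp2 sub_e V0 V1) (EApp2 sub_e V1 V0))).
Definition ltn_e := locked (EApp1 sg_e (EApp2 sub_e V1 V0)).
Definition ite_e := locked (EApp2 add_e (EApp2 mul_e (EApp1 sg_e V0) V1)
                                       (EApp2 mul_e (EApp1 nz_e V0) V2)).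
Definition odd_e := locked (ERec V0 EZero (EApp1 nz_e V1)).

Definition bmin_e : ex -> ex -> ex := locked (fun (p bnd : ex) =>
  ERec bnd EZero (EApp3 ite_e (EApp2 mul_e (EApp2 eqn_e V1 V0) (EApp1 sg_e (shift 1 p)))
                              (ESucc V0) V1)).

Fixpoint bmin (f : nat -> nat) (b : nat) : nat :=
  if b is k.+1 then (if (bmin f k == k) && (0 < f k) then k.+1 else bmin f k) else 0.

Section Lib2.
Variable o : nat -> nat -> nat.
Local Notation eval := (eval o).

Lemma eval_cst m env : eval (cst m) env = m.
Proof. by elim: m => //= m ->. Qed.

Lemma pred_eE x : eval pred_e [:: x] = x.-1.
Proof. by rewrite /pred_e -lock eval_rec; case: x. Qed.

Lemma add_eE x y : eval add_e [:: x; y] = x + y.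
Proof. by rewrite /add_e -lock eval_rec /=; elim: x => //= x ->. Qed.

Lemma sub_eE x y : eval sub_e [:: x; y] = x - y.
Proof. by rewrite /sub_e -lock eval_rec /=; elim: y => //= [|y ->]; rewrite ?subn0 // pred_eE subnS. Qed.

Lemma mul_eE x y : eval mul_e [:: x; y] = x * y.
Proof. by rewrite /mul_e -lock eval_rec /=; elim: x => //= x ->; rewrite add_eE mulSn addnC. Qed.

Lemma pow2_eE x : eval pow2_e [:: x] = 2 ^ x.
Proof. by rewrite /pow2_e -lock eval_rec /=; elim: x => //= x ->; rewrite add_eE expnS mul2n addnn. Qed.

Lemma sg_eE x : eval sg_e [:: x] = (0 < x).
Proof. by rewrite /sg_e -lock eval_rec /=; case: x. Qed.

Lemma nz_eE x : eval nz_e [:: x] = (x == 0).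
Proof. by rewrite /nz_e -lock eval_rec /=; case: x. Qed.

Lemma eqn_eE x y : eval eqn_e [:: x; y] = (x == y).
Proof.
rewrite /eqn_e -lock /= !sub_eE add_eE nz_eE addn_eq0 !subn_eq0.
by rewrite -eqn_leq.
Qed.

Lemma ltn_eE x y : eval ltn_e [:: x; y] = (x < y).
Proof. by rewrite /ltn_e -lock /= sub_eE sg_eE subn_gt0. Qed.

Lemma ite_eE c t e : eval ite_e [:: c; t; e] = if c == 0 then e else t.
Proof. by rewrite /ite_e -lock /= !mul_eE sg_eE nz_eE add_eE; case: c => //= *; rewrite ?mul1n ?addn0 ?mul0n. Qed.

Lemma odd_eE x : eval odd_e [:: x] = odd x.
Proof. by rewrite /odd_e -lock eval_rec /=; elim: x => //= x ->; rewrite nz_eE; case: (odd x). Qed.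

Lemma eval_bmin p bnd env :
  eval (bmin_e p bnd) env = bmin (fun y => eval p (y :: env)) (eval bnd env).
Proof.
rewrite /bmin_e -lock eval_rec /=; elim: (eval bnd env) => //= k ->.
rewrite ite_eE mul_eE eqn_eE sg_eE eval_shift1.
by case: (bmin _ k == k); case: (0 < _).
Qed.

End Lib2.

Lemma bminP f b : [/\ bmin f b <= b, (forall y, y < bmin f b -> 0 < f y) &
                    (bmin f b < b -> f (bmin f b) = 0)].
Proof.
elim: b => [|b [IH1 IH2 IH3]] /=; first by split.
case: ifP => [/andP [/eqP Hz Hf]|Hn].
  split=> //; last by rewrite ltnn.
  move=> y; rewrite ltnS leq_eqVlt => /orP [/eqP -> //|].
  by rewrite -Hz; apply: IH2.
split=> //; first exact: leqW.
rewrite ltnS leq_eqVlt => /orP [/eqP Hz|]; last exact: IH3.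
by move: Hn; rewrite Hz eqxx /=; case: (f b) => // n; rewrite ltn0Sn.
Qed.

Lemma bmin_eq f b y : y < b -> f y = 0 -> (forall z, z < y -> 0 < f z) -> bmin f b = y.
Proof.
move=> Hyb Hfy Hmin; case: (bminP f b) => H1 H2 H3.
case: (ltngtP (bmin f b) y) => // H.
- by have := Hmin _ H; rewrite H3 ?(ltn_trans H).
- by have := H2 _ H; rewrite Hfy.
Qed.

Lemma bmin_ltP f b : reflect (exists y, y < b /\ f y = 0) (bmin f b < b).
Proof.
case: (bminP f b) => H1 H2 H3; apply: (iffP idP).
  by move=> H; exists (bmin f b); split => //; apply: H3.
move=> [y [Hy Hf]]; case: ltnP => // H.
by have := H2 y (leq_trans Hy H); rewrite Hf.
Qed.

Lemma bmin_allP f b : reflect (forall y, y < b -> 0 < f y) (bmin f b == b).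
Proof.
case: (bminP f b) => H1 H2 H3; apply: (iffP eqP).
  by move=> H y; rewrite -H; apply: H2.
move=> H; apply/eqP; rewrite eqn_leq H1 /=; case: ltnP => // Hlt.
by have := H _ Hlt; rewrite H3.
Qed.

Definition div_e := locked (bmin_e (EApp1 nz_e (EApp2 ltn_e V1 (EApp2 mul_e (ESucc V0) V2))) (ESucc V0)).
Definition val2_e := locked (bmin_e (EApp1 nz_e (EApp1 odd_e (EApp2 div_e V1 (EApp1 pow2_e V0)))) V0).
Definition tail_e := locked (EApp2 div_e (EApp1 pred_e (EApp2 div_e V0 (EApp1 pow2_e (EApp1 val2_e V0)))) (cst 2)).
Definition tailn_e := locked (ERec V0 V1 (EApp1 tail_e V1)).
Definition nthc_e := locked (EApp1 val2_e (EApp2 tailn_e V0 V1)).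
Definition bitlen_e := locked (bmin_e (EApp1 nz_e (EApp2 ltn_e V1 (EApp1 pow2_e V0))) (ESucc V0)).
Definition cat_e := locked (EApp2 add_e V0 (EApp2 mul_e (EApp1 pow2_e (EApp1 bitlen_e V0)) V1)).
Definition powc_e := locked (ERec V1 EZero (EApp2 cat_e V2 V1)).

Lemma eq_bmin f g b : (forall y, f y = g y) -> bmin f b = bmin g b.
Proof. by move=> H; elim: b => //= b ->; rewrite H. Qed.

Definition bitlen (c : nat) := bmin (fun y => (nat_of_bool (c < 2 ^ y) == 0) : nat) c.+1.
Definition catc u v := u + 2 ^ (bitlen u) * v.
Definition powc u m := prec 0 (fun _ z => catc u z) m.

Fixpoint blen (s : seq nat) := if s is x :: s' then x + (blen s').+1 else 0.

Lemma codeS x s : CodeSeq.code (x :: s) = 2 ^ x * (CodeSeq.code s).*2.+1.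
Proof. by []. Qed.

Lemma code_lt_ge s : CodeSeq.code s < 2 ^ (blen s) /\ (s != [::] -> 2 ^ (blen s).-1 <= CodeSeq.code s).
Proof.
elim: s => [|x s [IH1 IH2]]; first by split.
rewrite codeS [blen _]/=; split.
  rewrite addnS expnS expnD mulnCA ltn_pmul2l ?expn_gt0 //; lia.
move=> _; rewrite addnS /= expnD leq_pmul2l ?expn_gt0 //.
case: s IH1 IH2 => [|y s] /=; first by rewrite expn0.
move=> _ /(_ isT); rewrite addnS /= expnS; lia.
Qed.

Lemma bitlen_code s : bitlen (CodeSeq.code s) = blen s.
Proof.
case: (code_lt_ge s); move: (CodeSeq.code s) => c H1 H2; apply: bmin_eq => /=.
- rewrite ltnS; case: s H1 H2 => [|x s] //= H1 /(_ isT) H2.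
  apply: leq_trans H2; rewrite addnS /=; exact: ltn_expl.
- by rewrite H1.
- move=> z Hz; case: s H1 H2 Hz => [|x s] //= H1 /(_ isT) H2 Hz.
  rewrite [c < _]ltnNge (leq_trans _ H2) // leq_exp2l //; move: Hz; rewrite addnS /=; lia.
Qed.

Lemma code_cat s t : CodeSeq.code (s ++ t) = catc (CodeSeq.code s) (CodeSeq.code t).
Proof.
rewrite /catc bitlen_code; elim: s => [|x s IH] /=; first by rewrite mul1n.
rewrite IH [blen _]/= addnS expnS expnD; lia.
Qed.

Lemma catcE u v : catc u v = CodeSeq.code (CodeSeq.decode u ++ CodeSeq.decode v).
Proof. by rewrite code_cat !CodeSeq.decodeK. Qed.

Section Lib3.
Variable o : nat -> nat -> nat.
Local Notation eval := (eval o).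

Lemma div_eE x d : 0 < d -> eval div_e [:: x; d] = x %/ d.
Proof.
move=> Hd; rewrite /div_e -lock eval_bmin; apply: bmin_eq => /=.
- by rewrite ltnS leq_div.
- by rewrite nz_eE ltn_eE mul_eE ltn_ceil.
- move=> z Hz; rewrite nz_eE ltn_eE mul_eE [x < _]ltnNge.
  suff -> : z.+1 * d <= x by []. apply: leq_trans (leq_trunc_div x d); exact: leq_mul.
Qed.

Lemma val2_eE x m : eval val2_e [:: 2 ^ x * m.*2.+1] = x.
Proof.
rewrite /val2_e -lock eval_bmin; apply: bmin_eq => /=.
- apply: leq_trans (ltn_expl x (ltnSn 1)) _; exact: leq_pmulr.
- by rewrite nz_eE odd_eE div_eE ?pow2_eE ?expn_gt0 // mulKn ?expn_gt0 //= odd_double.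
- move=> z Hz; rewrite nz_eE odd_eE div_eE ?pow2_eE ?expn_gt0 //.
  rewrite -(subnKC (ltnW Hz)) expnD -mulnA mulKn ?expn_gt0 // oddM oddX.
  by rewrite subn_eq0 [x <= z]leqNgt Hz.
Qed.

Lemma val2_e0 : eval val2_e [:: 0] = 0.
Proof. by rewrite /val2_e -lock eval_bmin. Qed.

Lemma tail_eE x m : eval tail_e [:: 2 ^ x * m.*2.+1] = m.
Proof.
rewrite /tail_e -lock /= val2_eE pow2_eE div_eE // [eval div_e [:: _ * _; _]]div_eE ?expn_gt0 // mulKn ?expn_gt0 //.
by rewrite pred_eE /= -mul2n mulKn.
Qed.

Lemma tail_e0 : eval tail_e [:: 0] = 0.
Proof.
by rewrite /tail_e -lock /= val2_e0 pow2_eE !div_eE // ?div0n pred_eE ?div0n.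
Qed.

Lemma val2_code s : eval val2_e [:: CodeSeq.code s] = head 0 s.
Proof. by case: s => [|x s]; [exact: val2_e0 | rewrite codeS val2_eE]. Qed.

Lemma tail_code s : eval tail_e [:: CodeSeq.code s] = CodeSeq.code (behead s).
Proof. by case: s => [|x s]; [exact: tail_e0 | rewrite codeS tail_eE]. Qed.

Lemma drop_behead (T : Type) (s : seq T) i : drop i.+1 s = behead (drop i s).
Proof. by elim: s i => [|x s IH] [|i] //=; rewrite drop0. Qed.

Lemma tailn_code i s : eval tailn_e [:: i; CodeSeq.code s] = CodeSeq.code (drop i s).
Proof.
rewrite /tailn_e -lock eval_rec /=; elim: i => [|i IH] /=; first by rewrite drop0.
by rewrite IH tail_code drop_behead.
Qed.

Lemma nthc_eE i c : eval nthc_e [:: i; c] = nth 0 (CodeSeq.decode c) i.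
Proof.
rewrite /nthc_e -lock /= -{1}[c]CodeSeq.decodeK tailn_code val2_code.
by rewrite -nth0 nth_drop addn0.
Qed.

Lemma bitlen_eE c : eval bitlen_e [:: c] = bitlen c.
Proof.
rewrite /bitlen_e -lock eval_bmin /bitlen; apply: eq_bmin => y.
by rewrite /= nz_eE ltn_eE pow2_eE.
Qed.

Lemma cat_eE u v : eval cat_e [:: u; v] = catc u v.
Proof. by rewrite /cat_e -lock /= bitlen_eE pow2_eE mul_eE add_eE. Qed.

Lemma powc_eE u m : eval powc_e [:: u; m] = powc u m.
Proof. by rewrite /powc_e -lock eval_rec /powc; apply: prec_ext => // k z /=; rewrite cat_eE. Qed.

End Lib3.

Definition consc a c := 2 ^ a * c.*2.+1.
Definition lc x b := consc x (consc b 0).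
Definition pc x b := consc (lc x b) (consc (lc x (1 - b)) 0).
Definition ipk s k := if s == 0 then consc (consc k 0) (consc 0 0)
                      else consc 0 (consc (consc k 0) 0).

Definition cons_e := locked (EApp2 mul_e (EApp1 pow2_e V0) (ESucc (EApp2 add_e V1 V1))).
Definition lc_e := locked (EApp2 cons_e V0 (EApp2 cons_e V1 EZero)).
Definition pc_e := locked (EApp2 cons_e (EApp2 lc_e V0 V1)
                     (EApp2 cons_e (EApp2 lc_e V0 (EApp2 sub_e (cst 1) V1)) EZero)).
Definition ipk_e := locked (EApp3 ite_e V0
   (EApp2 cons_e EZero (EApp2 cons_e (EApp2 cons_e V1 EZero) EZero))
   (EApp2 cons_e (EApp2 cons_e V1 EZero) (EApp2 cons_e EZero EZero))).

Definition fld n k f := nth 0 (CodeSeq.decode n) (k * 8 + f).+1.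
Definition earl (F : nat -> nat -> nat) k v := has (fun j => F j 1 == v) (iota 0 k).

Definition fld_e := locked (EApp2 nthc_e (ESucc (EApp2 add_e (EApp2 mul_e V1 (cst 8)) V2)) V0).
Definition earlier_e := locked (EApp2 ltn_e
   (bmin_e (EApp1 nz_e (EApp2 eqn_e (EApp3 fld_e V1 V0 (cst 1)) V3)) V1) V1).

Definition lok (o : nat -> nat -> nat) (E : nat -> bool) (l : nat -> nat) : bool :=
  let w := l 1 in
  match l 0 with
  | 0 => w == 0
  | 1 => o 1 (l 2) == 2 ^ w
  | 2 => [&& o 0 (l 6) == 2 ^ l 4, l 5 < 2, E (catc (l 2) (l 3)) &
             w == catc (l 2) (catc (pc (l 4) (l 5)) (l 3))]
  | 3 => [&& l 5 < 2, E (catc (l 2) (catc (pc (l 4) (l 5)) (l 3))) & w == catc (l 2) (l 3)]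
  | 4 => [&& E (catc (l 2) (l 3)), E (l 4) & w == catc (l 2) (catc (l 4) (l 3))]
  | 5 => [&& E (catc (l 2) (catc (l 4) (l 3))), E (l 4) & w == catc (l 2) (l 3)]
  | 6 => [&& l 2 < 2, o 2 (l 4) == 2 ^ ipk (l 2) (l 3), 0 < l 3 + l 2 &
             E (powc w (l 3 + l 2))]
  | 7 => [&& o 2 (l 3) == 2 ^ ipk 0 0, o 0 (l 4) == 2 ^ l 2 & w == consc (lc (l 2) 0) 0]
  | _ => false
  end.

Notation "'L' i" := (EApp3 fld_e V0 V1 (cst i)) (at level 0, i at level 0).
Notation "'EE' t" := (EApp3 earlier_e V0 V1 t) (at level 0, t at level 0).
Notation "a '=E' b" := (EApp2 eqn_e a b) (at level 70).
Notation "a '&E' b" := (EApp2 mul_e a b) (at level 40, left associativity).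
Notation "a '+E' b" := (EApp2 add_e a b) (at level 50, left associativity).
Notation catE a b := (EApp2 cat_e a b).
Notation pow2E a := (EApp1 pow2_e a).

Definition chk0 := L 1 =E EZero.
Definition chk1 := EOrc 1 (L 2) =E pow2E (L 1).
Definition chk2 := (EOrc 0 (L 6) =E pow2E (L 4)) &E EApp2 ltn_e (L 5) (cst 2)
   &E EE (catE (L 2) (L 3)) &E (L 1 =E catE (L 2) (catE (EApp2 pc_e (L 4) (L 5)) (L 3))).
Definition chk3 := EApp2 ltn_e (L 5) (cst 2)
   &E EE (catE (L 2) (catE (EApp2 pc_e (L 4) (L 5)) (L 3))) &E (L 1 =E catE (L 2) (L 3)).
Definition chk4 := EE (catE (L 2) (L 3)) &E EE (L 4) &E (L 1 =E catE (L 2) (catE (L 4) (L 3))).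
Definition chk5 := EE (catE (L 2) (catE (L 4) (L 3))) &E EE (L 4) &E (L 1 =E catE (L 2) (L 3)).
Definition chk6 := EApp2 ltn_e (L 2) (cst 2) &E (EOrc 2 (L 4) =E pow2E (EApp2 ipk_e (L 2) (L 3)))
   &E EApp2 ltn_e EZero (L 3 +E L 2) &E EE (EApp2 powc_e (L 1) (L 3 +E L 2)).
Definition chk7 := (EOrc 2 (L 3) =E pow2E (EApp2 ipk_e EZero EZero))
   &E (EOrc 0 (L 4) =E pow2E (L 2))
   &E (L 1 =E EApp2 cons_e (EApp2 lc_e (L 2) EZero) EZero).

Definition lok_e := locked (
  ((L 0 =E cst 0) &E chk0) +E ((L 0 =E cst 1) &E chk1) +E ((L 0 =E cst 2) &E chk2)
  +E ((L 0 =E cst 3) &E chk3) +E ((L 0 =E cst 4) &E chk4) +E ((L 0 =E cst 5) &E chk5)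
  +E ((L 0 =E cst 6) &E chk6) +E ((L 0 =E cst 7) &E chk7)).

Definition N_e := EApp2 nthc_e EZero V0.
Definition out_e := locked (
  (EApp1 sg_e N_e &E (bmin_e (EApp2 lok_e V1 V0) N_e =E N_e))
  &E pow2E (EApp3 fld_e V0 (EApp1 pred_e N_e) (cst 1))).

Definition Nof n := nth 0 (CodeSeq.decode n) 0.

Section Checker.
Variable o : nat -> nat -> nat.
Local Notation eval := (eval o).

Lemma cons_eE a c : eval cons_e [:: a; c] = consc a c.
Proof. by rewrite /cons_e -lock /= pow2_eE add_eE mul_eE addnn. Qed.

Lemma lc_eE x b : eval lc_e [:: x; b] = lc x b.
Proof. by rewrite /lc_e -lock /= !cons_eE. Qed.

Lemma pc_eE x b : eval pc_e [:: x; b] = pc x b.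
Proof. by rewrite /pc_e -lock /= !cons_eE !lc_eE sub_eE. Qed.

Lemma ipk_eE s k : eval ipk_e [:: s; k] = ipk s k.
Proof. by rewrite /ipk_e -lock /= !cons_eE ite_eE. Qed.

Lemma fld_eE n k f : eval fld_e [:: n; k; f] = fld n k f.
Proof. by rewrite /fld_e -lock /= mul_eE add_eE nthc_eE. Qed.

Lemma earlier_eE n k v : eval earlier_e [:: n; k; v] = earl (fld n) k v.
Proof.
rewrite /earlier_e -lock /= eval_bmin ltn_eE /earl.
congr nat_of_bool; apply/bmin_ltP/hasP.
  move=> [j [Hj]] /=; rewrite nz_eE eqn_eE fld_eE.
  by case E: (fld n j 1 == v) => //= _; exists j => //; rewrite mem_iota add0n Hj.
move=> [j]; rewrite mem_iota add0n => /andP [_ Hj] /eqP H; exists j; split=> //=.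
by rewrite nz_eE eqn_eE fld_eE H eqxx.
Qed.

Lemma mulnbE (a b : bool) : (a * b)%N = (a && b).
Proof. by case: a; case: b. Qed.

Lemma lok_eE n k : eval lok_e [:: n; k] = lok o (earl (fld n) k) (fld n k).
Proof.
rewrite /lok_e -lock /= /chk0 /chk1 /chk2 /chk3 /chk4 /chk5 /chk6 /chk7 /=.
rewrite !(fld_eE, earlier_eE, eqn_eE, mul_eE, ltn_eE, cat_eE, pow2_eE, pc_eE, ipk_eE,
          lc_eE, cons_eE, add_eE, powc_eE, eval_cst).
rewrite !mulnbE /lok.
case: (fld n k 0) => [|[|[|[|[|[|[|[|r]]]]]]]] /=; rewrite ?addn0 ?add0n ?andbA //.
Qed.

Definition valid n :=
  (0 < Nof n) && (bmin (fun k => nat_of_bool (lok o (earl (fld n) k) (fld n k))) (Nof n) == Nof n).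

Lemma out_eE n : eval out_e [:: n] = (valid n * 2 ^ (fld n (Nof n).-1 1))%N.
Proof.
rewrite /out_e -lock /= eval_bmin !nthc_eE sg_eE pred_eE fld_eE pow2_eE !mul_eE eqn_eE.
rewrite /valid /Nof -!mulnbE; do 3 f_equal; rewrite /N_e /= nthc_eE.
by rewrite (@eq_bmin _ (fun k : nat => lok o (earl (fld n) k) (fld n k))) // => y; rewrite lok_eE.
Qed.

Lemma out_prog n : peval o (compile 1 out_e) [:: n] (valid n * 2 ^ (fld n (Nof n).-1 1)).
Proof. by rewrite -out_eE; have := compile_ok o out_e 1 [:: n]; rewrite tk_size. Qed.

End Checker.

Definition wpow (w : word) (m : nat) : word := iter m (cat w) [::].

Section Kc.
Variables (X : nat -> Prop) (R : word -> Prop) (A : int -> Prop).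

Inductive Kc : word -> Prop :=
| K_nil : Kc [::]
| K_rel r : R r -> Kc r
| K_insL u v x b : X x -> Kc (u ++ v) -> Kc (u ++ [:: (x, b); (x, ~~ b)] ++ v)
| K_delL u v x b : Kc (u ++ [:: (x, b); (x, ~~ b)] ++ v) -> Kc (u ++ v)
| K_insK u v s : Kc s -> Kc (u ++ v) -> Kc (u ++ s ++ v)
| K_delK u v s : Kc s -> Kc (u ++ s ++ v) -> Kc (u ++ v)
| K_tor w z : A z -> 0 < absz z -> Kc (wpow w (absz z)) -> Kc w
| K_zero x : A 0 -> X x -> Kc [:: (x, false)].

End Kc.

Lemma pickleW (u : word) : pickle u = CodeSeq.code (map pickle u).
Proof. by []. Qed.

Lemma pickleL x (b : bool) : pickle ((x, b) : letter) = lc x b.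
Proof. by []. Qed.

Lemma pickle_pair x (b : bool) :
  pickle ([:: (x, b); (x, ~~ b)] : word) = pc x b.
Proof. by rewrite /pc; case: b. Qed.

Lemma pickle_someW (u : word) : pickle (Some u) = 2 ^ pickle u.
Proof. by rewrite -[RHS]muln1. Qed.

Lemma pickle_someN (x : nat) : pickle (Some x) = 2 ^ x.
Proof. by rewrite -[RHS]muln1. Qed.

Lemma pickle_someI (z : int) : pickle (Some z) = 2 ^ pickle z.
Proof. by rewrite -[RHS]muln1. Qed.

Lemma pickle_int s k : s < 2 ->
  ipk s k = pickle (if s == 0 then Posz k else Negz k).
Proof. by case: s => [|[|]]. Qed.

Lemma pickle_word_inj : injective (pickle : word -> nat).
Proof. by move=> u v /(congr1 (@unpickle word)); rewrite !pickleK => -[]. Qed.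

Lemma exp2I a b : 2 ^ a = 2 ^ b -> a = b.
Proof. by move/eqP; rewrite eqn_exp2l // => /eqP. Qed.

Lemma split_map (T : Type) (f : T -> nat) u s t :
  map f u = s ++ t -> exists u1 u2, [/\ u = u1 ++ u2, map f u1 = s & map f u2 = t].
Proof.
move=> H; exists (take (size s) u), (drop (size s) u); split.
- by rewrite cat_take_drop.
- by rewrite map_take H take_size_cat.
- by rewrite map_drop H drop_size_cat.
Qed.

Lemma catc_pickle (u v : word) : catc (pickle u) (pickle v) = pickle (u ++ v).
Proof. by rewrite !pickleW map_cat code_cat. Qed.

Lemma catc_inv c1 c2 (u : word) : catc c1 c2 = pickle u ->
  exists u1 u2, [/\ u = u1 ++ u2, pickle u1 = c1 & pickle u2 = c2].
Proof.
rewrite catcE pickleW => /(can_inj CodeSeq.codeK) /esym /split_map [u1 [u2 [-> H1 H2]]].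
by exists u1, u2; rewrite !pickleW H1 H2 !CodeSeq.decodeK.
Qed.

Lemma powc_pickle (u : word) m : powc (pickle u) m = pickle (wpow u m).
Proof. by elim: m => //= m IH; rewrite /powc /= -/(powc _ _) IH catc_pickle. Qed.

Section Sound.
Variables (eX : nat -> option nat) (eR : nat -> option word) (eA : nat -> option int).
Local Notation o := (input_oracle eX eR eA).
Local Notation X := (enum_set eX).
Local Notation R := (enum_set eR).
Local Notation A := (enum_set eA).

Lemma oracle0 j x : o 0 j = 2 ^ x -> X x.
Proof.
rewrite /=; case E: (eX j) => [y|]; last by move=> H; have := expn_gt0 2 x; rewrite -H.
by rewrite pickle_someN => /exp2I <-; exists j.
Qed.

Lemma oracle1 j w : o 1 j = 2 ^ w -> exists r, pickle r = w /\ R r.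
Proof.
rewrite /=; case E: (eR j) => [r|]; last by move=> H; have := expn_gt0 2 w; rewrite -H.
by rewrite pickle_someW => /exp2I <-; exists r; split=> //; exists j.
Qed.

Lemma oracle2 j p : o 2 j = 2 ^ p -> exists z, pickle z = p /\ A z.
Proof.
rewrite /=; case E: (eA j) => [z|]; last by move=> H; have := expn_gt0 2 p; rewrite -H.
by rewrite pickle_someI => /exp2I <-; exists z; split=> //; exists j.
Qed.

Lemma sound_lines (F : nat -> nat -> nat) N :
  (forall k, k < N -> lok o (earl F k) (F k)) ->
  forall k, k < N -> exists u : word, pickle u = F k 1 /\ Kc X R A u.
Proof.
move=> Hok; elim/ltn_ind => k IH Hk.
have HE : forall v, earl F k v -> exists u : word, pickle u = v /\ Kc X R A u.
  move=> v /hasP [j]; rewrite mem_iota add0n => /andP [_ Hj] /eqP <-.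
  exact: IH Hj (ltn_trans Hj Hk).
move: (Hok k Hk); rewrite /lok.
case: (F k 0) => [|[|[|[|[|[|[|[|r]]]]]]]] //=.
- by move/eqP ->; exists [::]; split=> //; apply: K_nil.
- by move/eqP/oracle1 => [r [Hr HR]]; exists r; split=> //; apply: K_rel.
- case/and4P => /eqP /oracle0 HX Hb /HE [u0 [Hu0 HK]] /eqP ->.
  case/esym/catc_inv: Hu0 => u1 [u2 [Hu0 H1 H2]]; subst.
  have -> : pc (F k 4) (F k 5) = pickle ([:: (F k 4, F k 5 == 1); (F k 4, ~~ (F k 5 == 1))] : word).
    by rewrite pickle_pair; case: (F k 5) Hb => [|[|]].
  rewrite -H1 -H2 !catc_pickle; eexists; split; first by [].
  exact: K_insL.
- case/and3P => Hb /HE [u0 [Hu0 HK]] /eqP ->.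
  have Hp : pc (F k 4) (F k 5) = pickle ([:: (F k 4, F k 5 == 1); (F k 4, ~~ (F k 5 == 1))] : word).
    by rewrite pickle_pair; case: (F k 5) Hb => [|[|]].
  case/esym/catc_inv: Hu0 => u1 [m [Hu0 H1 H2]].
  case/esym/catc_inv: H2 => p [u2 [Hm Hp' H3]].
  move: Hp'; rewrite Hp => /pickle_word_inj Hp'; subst.
  rewrite -H1 -H3 catc_pickle; eexists; split; first by [].
  exact: K_delL HK.
- case/and3P => /HE [u0 [Hu0 HK]] /HE [s [Hs HKs]] /eqP ->.
  case/esym/catc_inv: Hu0 => u1 [u2 [Hu0 H1 H2]]; subst.
  rewrite -H1 -H2 -Hs !catc_pickle; eexists; split; first by [].
  exact: K_insK.
- case/and3P => /HE [u0 [Hu0 HK]] /HE [s [Hs HKs]] /eqP ->.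
  case/esym/catc_inv: Hu0 => u1 [m [Hu0 H1 H2]].
  case/esym/catc_inv: H2 => s' [u2 [Hm Hs' H3]].
  move: Hs'; rewrite -Hs => /pickle_word_inj Hs'; subst.
  rewrite -H1 -H3 catc_pickle; eexists; split; first by [].
  exact: K_delK HKs HK.
- case/and4P => Hs /eqP /oracle2 [z [Hz HA]] Hm /HE [u0 [Hu0 HK]].
  move: Hz; rewrite pickle_int // => /(pcan_inj pickleK) Hz.
  have Hab : absz z = F k 3 + F k 2.
    by rewrite Hz; case: (F k 2) Hs => [|[|]] //= _; rewrite ?addn0 ?addn1.
  move: Hu0 Hm; rewrite -Hab; case E: (absz z) => [|m] // Hu0 _.
  rewrite /powc /= -/(powc _ _) in Hu0.
  case/esym/catc_inv: Hu0 => u1 [u2 [Hu0 H1 H2]].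
  exists u1; split=> //.
  apply: (K_tor (z := z)) => //; first by rewrite E.
  suff -> : wpow u1 (absz z) = u0 by [].
  apply: pickle_word_inj; rewrite -powc_pickle H1 E Hu0 -catc_pickle H1 H2.
  by [].
- case/and3P => /eqP /oracle2 [z [Hz HA]] /eqP /oracle0 HX /eqP ->.
  move: Hz; rewrite (@pickle_int 0 0) // => /(pcan_inj pickleK) Hz; subst.
  exists [:: (F k 2, false)]; split; first by [].
  exact: K_zero.
Qed.

End Sound.

Definition Fl (ls : seq (seq nat)) k f := nth 0 (nth [::] ls k) f.

Lemma lok_mono o (E E' : nat -> bool) l : (forall v, E v -> E' v) -> lok o E l -> lok o E' l.
Proof.
move=> H; rewrite /lok; case: (l 0) => [|[|[|[|[|[|[|[|r]]]]]]]] //=.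
- by case/and4P => -> -> /H -> ->.
- by case/and3P => -> /H -> ->.
- by case/and3P => /H -> /H -> ->.
- by case/and3P => /H -> /H -> ->.
- by case/and4P => -> -> -> /H ->.
Qed.

Lemma lok_ext o (E E' : nat -> bool) l l' : (forall v, E v = E' v) ->
  (forall f, f < 8 -> l f = l' f) -> lok o E l = lok o E' l'.
Proof.
move=> HE Hl; rewrite /lok !Hl //.
case: (l' 0) => [|[|[|[|[|[|[|[|r]]]]]]]] //=; by rewrite !HE.
Qed.

Lemma Fl_catl ls1 ls2 k : k < size ls1 -> Fl (ls1 ++ ls2) k = Fl ls1 k.
Proof. by move=> Hk; rewrite /Fl nth_cat Hk. Qed.

Lemma Fl_catr ls1 ls2 k : Fl (ls1 ++ ls2) (size ls1 + k) = Fl ls2 k.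
Proof. by rewrite /Fl nth_cat ltnNge leq_addr /= addKn. Qed.

Lemma earl_at ls j k v : j < k -> Fl ls j 1 = v -> earl (Fl ls) k v.
Proof. by move=> Hj Hv; apply/hasP; exists j; rewrite ?mem_iota ?Hv //. Qed.

Section Complete.
Variables (eX : nat -> option nat) (eR : nat -> option word) (eA : nat -> option int).
Local Notation o := (input_oracle eX eR eA).
Local Notation X := (enum_set eX).
Local Notation R := (enum_set eR).
Local Notation A := (enum_set eA).

Definition validL ls := forall k, k < size ls -> lok o (earl (Fl ls) k) (Fl ls k).

Lemma validL_app ls1 ls2 : validL ls1 ->
  (forall k, k < size ls2 -> lok o (earl (Fl (ls1 ++ ls2)) (size ls1 + k)) (Fl ls2 k)) ->
  validL (ls1 ++ ls2).
Proof.
move=> H1 H2 k; rewrite size_cat => Hk; case: (ltnP k (size ls1)) => Hk1.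
  rewrite Fl_catl //; apply: lok_mono (H1 k Hk1) => v /hasP [j Hj Hv].
  apply/hasP; exists j => //; move: Hj; rewrite mem_iota add0n => /andP [_ Hj].
  by rewrite Fl_catl // (ltn_trans Hj Hk1).
rewrite -(subnKC Hk1) Fl_catr; apply: H2; lia.
Qed.

Lemma validL_cat ls1 ls2 : validL ls1 -> validL ls2 -> validL (ls1 ++ ls2).
Proof.
move=> H1 H2; apply: validL_app => // k Hk; apply: lok_mono (H2 k Hk) => v /hasP [j Hj /eqP Hv].
move: Hj; rewrite mem_iota add0n => /andP [_ Hj].
by apply: (earl_at (j := size ls1 + j)); rewrite ?ltn_add2l ?Fl_catr.
Qed.

Lemma validL_snoc ls line : validL ls -> lok o (earl (Fl ls) (size ls)) (nth 0 line) ->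
  validL (ls ++ [:: line]).
Proof.
move=> H1 H2; apply: validL_app => // -[|k] //= _; rewrite addn0.
apply: lok_mono H2 => v /hasP [j Hj Hv]; apply/hasP; exists j => //.
by move: Hj; rewrite mem_iota add0n => /andP [_ Hj]; rewrite Fl_catl.
Qed.

Definition cert (u : word) := exists ls : seq (seq nat), [/\ all (fun l => size l == 8) ls, 0 < size ls,
  validL ls & Fl ls (size ls).-1 1 = pickle u].

Lemma cert1 ls (u : word) line : all (fun l => size l == 8) ls -> validL ls -> size line == 8 ->
  lok o (earl (Fl ls) (size ls)) (nth 0 line) -> nth 0 line 1 = pickle u -> cert u.
Proof.
move=> Hs Hv Hl Hok Hw; exists (ls ++ [:: line]); split.
- by rewrite all_cat Hs /= Hl.
- by rewrite size_cat addn1.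
- exact: validL_snoc.
- by rewrite size_cat addn1 /= -[size ls]addn0 Fl_catr.
Qed.

Lemma last_in ls (u : word) k : 0 < size ls -> Fl ls (size ls).-1 1 = pickle u ->
  size ls <= k -> earl (Fl ls) k (pickle u).
Proof. by move=> H0 Hw Hk; apply: (earl_at (j := (size ls).-1)) => //; lia. Qed.

Lemma last_in2 ls1 ls2 (u : word) k : 0 < size ls1 -> Fl ls1 (size ls1).-1 1 = pickle u ->
  size ls1 <= k -> earl (Fl (ls1 ++ ls2)) k (pickle u).
Proof.
move=> H0 Hw Hk; apply: (earl_at (j := (size ls1).-1)); first lia.
by rewrite Fl_catl // prednK.
Qed.

Lemma last_in3 ls1 ls2 (u : word) k : 0 < size ls2 -> Fl ls2 (size ls2).-1 1 = pickle u ->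
  size ls1 + size ls2 <= k -> earl (Fl (ls1 ++ ls2)) k (pickle u).
Proof.
move=> H0 Hw Hk; apply: (earl_at (j := size ls1 + (size ls2).-1)); first lia.
by rewrite Fl_catr.
Qed.

Lemma validL_nil : validL [::].
Proof. by []. Qed.

Lemma complete u : Kc X R A u -> cert u.
Proof.
elim=> {u}.
- apply: (@cert1 [::] _ [:: 0; 0; 0; 0; 0; 0; 0; 0]) => //.
- move=> r [j Hj]; apply: (@cert1 [::] _ [:: 1; pickle r; j; 0; 0; 0; 0; 0]) => //=.
  by rewrite /lok /= Hj pickle_someW.
- move=> u v x b [j Hj] _ [ls [Hs H0 Hv Hw]].
  apply: (@cert1 ls _ [:: 2; pickle (u ++ [:: (x, b); (x, ~~ b)] ++ v); pickle u; pickle v;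
                       x; nat_of_bool b; j; 0]) => //=.
  rewrite /lok /= Hj pickle_someN eqxx /= -pickle_pair !catc_pickle eqxx andbT.
  by rewrite (last_in H0 Hw) // andbT; case: (b).
- move=> u v x b _ [ls [Hs H0 Hv Hw]].
  apply: (@cert1 ls _ [:: 3; pickle (u ++ v); pickle u; pickle v;
                       x; nat_of_bool b; 0; 0]) => //=.
  rewrite /lok /= -pickle_pair !catc_pickle eqxx andbT (last_in H0 Hw) // andbT.
  by case: (b).
- move=> u v s _ [ls1 [Hs1 H01 Hv1 Hw1]] _ [ls2 [Hs2 H02 Hv2 Hw2]].
  apply: (@cert1 (ls1 ++ ls2) _ [:: 4; pickle (u ++ s ++ v); pickle u; pickle v;
                       pickle s; 0; 0; 0]) => //=.
  + by rewrite all_cat Hs1.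
  + exact: validL_cat.
  rewrite /lok /= !catc_pickle eqxx andbT (last_in3 H02 Hw2) ?size_cat //.
  by rewrite (last_in2 _ H01 Hw1) // leq_addr.
- move=> u v s _ [ls1 [Hs1 H01 Hv1 Hw1]] _ [ls2 [Hs2 H02 Hv2 Hw2]].
  apply: (@cert1 (ls1 ++ ls2) _ [:: 5; pickle (u ++ v); pickle u; pickle v;
                       pickle s; 0; 0; 0]) => //=.
  + by rewrite all_cat Hs1.
  + exact: validL_cat.
  rewrite /lok /= !catc_pickle eqxx andbT (last_in3 H02 Hw2) ?size_cat //.
  by rewrite (last_in2 _ H01 Hw1) // leq_addr.
- move=> w z [j Hj] Hz _ [ls [Hs H0 Hv Hw]].
  have [sg [k [Hsg Hzk Hab]]] : exists sg k, [/\ sg < 2, pickle z = ipk sg k & absz z = k + sg].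
    case: z {Hj Hz Hw} => k; [exists 0, k | exists 1, k]; split => //.
    by rewrite addn0.
    by rewrite addn1.
  apply: (@cert1 ls _ [:: 6; pickle w; sg; k; j; 0; 0; 0]) => //=.
  rewrite /lok /= Hsg Hj pickle_someI Hzk eqxx -Hab Hz /= powc_pickle.
  exact: last_in.
- move=> x [j Hj] [j' Hj'].
  apply: (@cert1 [::] _ [:: 7; pickle [:: (x, false)]; x; j; j'; 0; 0; 0]) => //=.
  by rewrite /lok /= Hj Hj' pickle_someI pickle_someN !eqxx.
Qed.

End Complete.

Definition encode (ls : seq (seq nat)) := CodeSeq.code (size ls :: flatten ls).

Lemma nth_flatten8 ls k f : all (fun l => size l == 8) ls -> k < size ls -> f < 8 ->
  nth 0 (flatten ls) (k * 8 + f) = Fl ls k f.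
Proof.
elim: ls k => [|l ls IH] k //= /andP [/eqP Hl Hs] Hk Hf; rewrite nth_cat Hl.
case: k Hk => [|k] Hk; first by rewrite mul0n add0n Hf.
by rewrite mulSn -addnA ltnNge leq_addr /= addKn IH.
Qed.

Lemma Nof_encode ls : Nof (encode ls) = size ls.
Proof. by rewrite /Nof /encode CodeSeq.codeK. Qed.

Lemma fld_encode ls k f : all (fun l => size l == 8) ls -> k < size ls -> f < 8 ->
  fld (encode ls) k f = Fl ls k f.
Proof. by move=> *; rewrite /fld /encode CodeSeq.codeK /= nth_flatten8. Qed.

Section Main.
Variables (eX : nat -> option nat) (eR : nat -> option word) (eA : nat -> option int).
Local Notation o := (input_oracle eX eR eA).
Local Notation X := (enum_set eX).
Local Notation R := (enum_set eR).
Local Notation A := (enum_set eA).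

Lemma valid_encode ls : all (fun l => size l == 8) ls -> 0 < size ls -> validL eX eR eA ls ->
  valid o (encode ls).
Proof.
move=> Hs H0 Hv; rewrite /valid Nof_encode H0 /=; apply/bmin_allP => y Hy.
rewrite (@lok_ext _ _ (earl (Fl ls) y) _ (Fl ls y)); first by rewrite (Hv y Hy).
- move=> v; apply: eq_in_has => j; rewrite mem_iota add0n => /andP [_ Hj] /=.
  by rewrite fld_encode // (ltn_trans Hj Hy).
- by move=> f Hf; rewrite fld_encode.
Qed.

Lemma valid_sound n : valid o n ->
  exists u : word, pickle u = fld n (Nof n).-1 1 /\ Kc X R A u.
Proof.
case/andP => H0 /bmin_allP H.
apply: (@sound_lines eX eR eA (fld n) (Nof n)); last by rewrite prednK.
by move=> k Hk; have := H k Hk; case: (lok _ _ _).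
Qed.

Definition eRp (n : nat) : option word :=
  if valid o n then pickle_inv (fld n (Nof n).-1 1) else None.

Lemma eRp_peval n : peval o (compile 1 out_e) [:: n] (pickle (eRp n)).
Proof.
have := out_prog o n; rewrite /eRp; case: ifP => Hv; last by rewrite mul0n.
case: (valid_sound Hv) => u [<- _]; rewrite pickleK_inv mul1n pickle_someW.
by [].
Qed.

Lemma eRp_sound w : enum_set eRp w -> Kc X R A w.
Proof.
move=> [n]; rewrite /eRp; case: ifP => // Hv.
by case: (valid_sound Hv) => u [<- HK]; rewrite pickleK_inv => -[<-].
Qed.

Lemma eRp_complete w : Kc X R A w -> enum_set eRp w.
Proof.
move/complete => [ls [Hs H0 Hv Hw]]; exists (encode ls).
rewrite /eRp valid_encode // Nof_encode fld_encode // ?Hw ?pickleK_inv //.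
lia.
Qed.

End Main.

Ltac gtr m := apply: (@geq_trans _ _ m).

Section GroupLemmas.
Variable K : sgroup.
Implicit Types x y : K.

Lemma gsym x y : Defs.geq x y -> Defs.geq y x. Proof. exact: geq_sym. Qed.

Lemma idem_one y : Defs.geq (gmul y y) y -> Defs.geq y gone.
Proof.
move=> H; gtr (gmul (@gone K) y); first exact: gsym (gmul1g y).
gtr (gmul (gmul (ginv y) y) y); first exact: gmul_compat (gsym (gmulVg y)) (geq_refl y).
gtr (gmul (ginv y) (gmul y y)); first exact: gsym (gmulA _ _ _).
gtr (gmul (ginv y) y); last exact: gmulVg.
exact: gmul_compat (geq_refl _) H.
Qed.

Lemma mulgV x : Defs.geq (gmul x (ginv x)) gone.
Proof.
apply: idem_one.
gtr (gmul x (gmul (ginv x) (gmul x (ginv x)))); first exact: gsym (gmulA _ _ _).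
apply: gmul_compat (geq_refl _) _.
gtr (gmul (gmul (ginv x) x) (ginv x)); first exact: gmulA.
gtr (gmul gone (ginv x)); last exact: gmul1g.
exact: gmul_compat (gmulVg x) (geq_refl _).
Qed.

Lemma mulg1 x : Defs.geq (gmul x gone) x.
Proof.
gtr (gmul x (gmul (ginv x) x)); first exact: gmul_compat (geq_refl _) (gsym (gmulVg x)).
gtr (gmul (gmul x (ginv x)) x); first exact: gmulA.
gtr (gmul (@gone K) x); last exact: gmul1g.
exact: gmul_compat (mulgV x) (geq_refl _).
Qed.

Lemma ginv1 : Defs.geq (ginv (@gone K)) gone.
Proof. gtr (gmul (ginv (@gone K)) gone); [exact: gsym (mulg1 _) | exact: gmulVg]. Qed.

Lemma ginv_one x : Defs.geq x gone -> Defs.geq (ginv x) gone.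
Proof. by move=> H; gtr (ginv (@gone K)); [exact: ginv_compat | exact: ginv1]. Qed.

Lemma mul_one_l x y : Defs.geq x gone -> Defs.geq (gmul x y) y.
Proof. by move=> H; gtr (gmul gone y); [exact: gmul_compat H (geq_refl _) | exact: gmul1g]. Qed.

End GroupLemmas.

Section Pres.
Variables (X : nat -> Prop) (R : word -> Prop) (A : int -> Prop).

Definition Xb x : bool := if ClassicalDescription.excluded_middle_informative (X x) then true else false.
Lemma XbP x : reflect (X x) (Xb x).
Proof. by rewrite /Xb; case: ClassicalDescription.excluded_middle_informative => H; constructor. Qed.

Definition fX (w : word) : word := filter (fun l : letter => Xb l.1) w.

Lemma onX_fX w : onX X (fX w).
Proof. by move=> l; rewrite mem_filter => /andP [/XbP]. Qed.

Lemma fX_id w : onX X w -> fX w = w.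
Proof. by move=> H; apply/all_filterP/allP => l /H /XbP. Qed.

Lemma fX_cat u v : fX (u ++ v) = fX u ++ fX v.
Proof. exact: filter_cat. Qed.

Lemma onX_catE u v : onX X (u ++ v) <-> onX X u /\ onX X v.
Proof.
split; last by case; apply: onX_cat.
by move=> H; split=> l Hl; apply: H; rewrite mem_cat Hl ?orbT.
Qed.

Lemma onX_pair x b : onX X [:: (x, b); (x, ~~ b)] <-> X x.
Proof.
split; first by move/(_ (x, b)); rewrite inE eqxx; apply.
by move=> Hx l; rewrite !inE => /orP [] /eqP ->.
Qed.

Lemma wpowS w m : wpow w m.+1 = w ++ wpow w m.
Proof. by []. Qed.

Lemma onX_wpow w m : onX X w -> onX X (wpow w m).
Proof. by move=> H; elim: m => [|m IH] //; rewrite wpowS; apply: onX_cat. Qed.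

Hypothesis HR : forall w, R w -> onX X w.

Lemma Kc_onX w : Kc X R A w -> onX X w.
Proof.
elim=> {w}.
- by [].
- exact: HR.
- move=> u v x b Hx _ /onX_catE [Hu Hv]; apply/onX_catE; split=> //.
  by apply/onX_catE; split=> //; apply/onX_pair.
- by move=> u v x b _ /onX_catE [Hu /onX_catE [_ Hv]]; apply/onX_catE.
- move=> u v s _ Hs _ /onX_catE [Hu Hv]; apply/onX_catE; split=> //.
  by apply/onX_catE.
- by move=> u v s _ _ _ /onX_catE [Hu /onX_catE [_ Hv]]; apply/onX_catE.
- move=> w z _ Hz _; case: (absz z) Hz => // m _.
  by rewrite wpowS => /onX_catE [].
- by move=> x _ Hx l; rewrite inE => /eqP ->.
Qed.

Lemma winvK w : winv (winv w) = w.
Proof.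
rewrite /winv map_rev revK -map_comp; elim: w => //= [[x b] w] ->.
by rewrite /= negbK.
Qed.

Lemma winv_cons x b w : winv ((x, b) :: w) = winv w ++ [:: (x, ~~ b)].
Proof. by rewrite /winv /= rev_cons cats1. Qed.

Lemma Kc_cancel w : onX X w -> forall u v, Kc X R A (u ++ v) -> Kc X R A (u ++ (winv w ++ w) ++ v).
Proof.
elim: w => [|[x b] w IH] Hw u v HK /=; first by [].
have /onX_catE [Hx Hw'] : onX X ([:: (x, b)] ++ w) by [].
have HX : X x by apply: (Hx (x, b)); rewrite inE.
have H1 := IH Hw' u v HK.
have E1 : u ++ (winv w ++ w) ++ v = (u ++ winv w) ++ (w ++ v) by rewrite !catA.
rewrite E1 in H1.
have H2 := @K_insL X R A (u ++ winv w) (w ++ v) x (~~ b) HX H1.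
move: H2; rewrite negbK winv_cons.
have -> : u ++ ((winv w ++ [:: (x, ~~ b)]) ++ (x, b) :: w) ++ v =
          (u ++ winv w) ++ [:: (x, ~~ b); (x, b)] ++ w ++ v by rewrite -!catA.
by [].
Qed.

Lemma Kc_winv w : onX X w -> Kc X R A w -> Kc X R A (winv w).
Proof.
move=> Hw HK; have H := Kc_cancel Hw (K_nil X R A) (u := [::]) (v := [::]).
have := @K_delK X R A (winv w) [::] w HK; rewrite !cats0; apply.
by move: H; rewrite /= cats0.
Qed.

Lemma Kc_all w : A 0 -> onX X w -> Kc X R A w.
Proof.
move=> HA; elim: w => [|[x b] w IH] Hw; first exact: K_nil.
have /onX_catE [Hx Hw'] : onX X ([:: (x, b)] ++ w) by [].
have HX : X x by apply: (Hx (x, b)); rewrite inE.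
have Hl : Kc X R A [:: (x, b)].
  case: (b); last exact: K_zero.
  have := @K_insL X R A [::] [::] x true HX (K_nil _ _ _); rewrite /= => H.
  have := @K_delK X R A [:: (x, true)] [::] [:: (x, false)] (@K_zero X R A x HA HX).
  by apply.
by have := @K_insK X R A [::] w [:: (x, b)] Hl (IH Hw').
Qed.

End Pres.

Lemma wcong_mono (R R' : word -> Prop) u v : (forall r, R r -> R' r) -> wcong R u v -> wcong R' u v.
Proof.
move=> H; elim=> {u v}.
- move=> w; exact: wc_refl.
- move=> u v _ IH; exact: wc_sym.
- move=> u v w _ IH1 _ IH2; exact: wc_trans IH2.
- move=> u u' v v' _ IH1 _ IH2; exact: wc_cat.
- move=> x b; exact: wc_free.
- move=> r Hr; apply: wc_rel; exact: H.
Qed.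

Lemma fX_pair X x b : fX X [:: (x, b); (x, ~~ b)] = if Xb X x then [:: (x, b); (x, ~~ b)] else [::].
Proof. by rewrite /fX /=; case: (Xb X x). Qed.

Lemma fX_nil X : fX X [::] = [::].
Proof. by []. Qed.

Lemma sval_gexpn X R (g : Pres X R) m : sval (gexpn g m) = wpow (sval g) m.
Proof. by elim: m => //= m ->. Qed.

Section Univ.
Variables (X : nat -> Prop) (R R' : word -> Prop) (A : int -> Prop).
Hypothesis HR : forall w, R w -> onX X w.
Hypothesis HR'1 : forall w, R' w -> Kc X R A w.
Hypothesis HR'2 : forall w, Kc X R A w -> R' w.

Lemma HR'X w : R' w -> onX X w.
Proof. by move=> H; apply: (Kc_onX HR); apply: HR'1. Qed.

Lemma wcong_Kc p q : wcong R' p q ->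
  forall a b, Kc X R A (fX X (a ++ p ++ b)) <-> Kc X R A (fX X (a ++ q ++ b)).
Proof.
elim=> {p q}.
- by [].
- by move=> u v _ IH a b; apply: iff_sym.
- by move=> u v w _ IH1 _ IH2 a b; apply: iff_trans (IH1 a b) (IH2 a b).
- move=> u u' v v' _ IH1 _ IH2 a b.
  have -> : a ++ (u ++ v) ++ b = a ++ u ++ (v ++ b) by rewrite -catA.
  have -> : a ++ (u' ++ v') ++ b = (a ++ u') ++ v' ++ b by rewrite -!catA.
  apply: iff_trans (IH1 a (v ++ b)) _.
  have -> : a ++ u' ++ v ++ b = (a ++ u') ++ v ++ b by rewrite -catA.
  exact: IH2.
- move=> x b0 a b; rewrite !fX_cat fX_pair fX_nil; case: (XbP X x) => Hx //.
  by split => H; [exact: K_delL H | exact: K_insL].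
- move=> r Hr a b; rewrite !fX_cat fX_nil (fX_id (HR'X Hr)).
  by split => H; [exact: K_delK (HR'1 Hr) H | exact: K_insK (HR'1 Hr) H].
Qed.

Lemma atf_Pres : A_torsion_free A (Pres X R').
Proof.
move=> g n HA H.
have HK : Kc X R A (sval (gpowz g n)).
  have := wcong_Kc H [::] [::]; rewrite /= !cats0 fX_id; last exact: svalP.
  by case=> _; apply; apply: K_nil.
have HKg : Kc X R A (sval g).
  clear H; case: n HA HK => m HA HK.
  - rewrite /= sval_gexpn in HK; case: m HA HK => [|m] HA HK.
      exact: (Kc_all R HA (svalP g)).
    by apply: (@K_tor X R A _ (Posz m.+1)).
  - have HK' : Kc X R A (wpow (sval g) m.+1).
      rewrite -[wpow _ _]winvK; apply: Kc_winv.
        by apply: onX_winv; apply: onX_wpow; apply: svalP.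
      by move: HK; rewrite /= sval_gexpn.
    by apply: (@K_tor X R A _ (Negz m)).
by apply: wc_rel; apply: HR'2.
Qed.

Section Hom.
Variable K : sgroup.
Variable f : Pres X R -> K.
Hypothesis Hf : is_hom f.
Hypothesis HK : A_torsion_free A K.

Definition pf (w : word) : Pres X R := exist _ (fX X w) (@onX_fX X w).

Lemma fS (x y : Pres X R) : sval x = sval y -> Defs.geq (f x) (f y).
Proof. by move=> E; apply: Hf.1; change (wcong R (sval x) (sval y)); rewrite E; apply: wc_refl. Qed.

Lemma f_one : Defs.geq (f (pone X)) gone.
Proof.
apply: idem_one; gtr (f (gmul (pone X : Pres X R) (pone X))).
  exact: gsym (Hf.2 _ _).
exact: fS.
Qed.

Lemma f_gexpn (g : Pres X R) m : Defs.geq (f (gexpn g m)) (gexpn (f g) m).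
Proof.
elim: m => [|m IH] /=; first exact: f_one.
gtr (gmul (f g) (f (gexpn g m))); first exact: Hf.2.
exact: gmul_compat (geq_refl _) IH.
Qed.

Lemma f_Kc w : Kc X R A w -> forall H : onX X w, Defs.geq (f (exist _ w H)) gone.
Proof.
elim=> {w}.
- by move=> H; gtr (f (pone X)); [exact: fS | exact: f_one].
- move=> r Hr H; gtr (f (pone X)); last exact: f_one.
  by apply: Hf.1; apply: wc_rel.
- move=> u v x b Hx _ IH H.
  have H' : onX X (u ++ v).
    by move: H => /onX_catE [Hu /onX_catE [_ Hv]]; apply/onX_catE.
  gtr (f (exist _ (u ++ v) H')); last exact: IH.
  apply: Hf.1; exact: (wc_cat (wc_refl R u) (wc_cat (wc_free R x b) (wc_refl R v))).
- move=> u v x b HK' IH H.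
  have H' := Kc_onX HR HK'.
  gtr (f (exist _ _ H')); last exact: IH.
  apply: Hf.1; apply: wc_sym.
  exact: (wc_cat (wc_refl R u) (wc_cat (wc_free R x b) (wc_refl R v))).
- move=> u v s HKs IHs HK' IH H.
  have Hs := Kc_onX HR HKs.
  have Huv := Kc_onX HR HK'; have /onX_catE [Hu Hv] := Huv.
  pose U : Pres X R := exist _ u Hu; pose S : Pres X R := exist _ s Hs.
  pose V : Pres X R := exist _ v Hv.
  gtr (f (gmul U (gmul S V))); first exact: fS.
  gtr (gmul (f U) (f (gmul S V))); first exact: Hf.2.
  gtr (gmul (f U) (gmul (f S) (f V))); first exact: gmul_compat (geq_refl _) (Hf.2 _ _).
  gtr (gmul (f U) (f V)); first exact: gmul_compat (geq_refl _) (mul_one_l _ (IHs Hs)).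
  gtr (f (gmul U V)); first exact: gsym (Hf.2 _ _).
  gtr (f (exist _ _ Huv)); [exact: fS | exact: IH].
- move=> u v s HKs IHs HK' IH H.
  have Hs := Kc_onX HR HKs.
  have Husv := Kc_onX HR HK'; have /onX_catE [Hu Hv] := H.
  pose U : Pres X R := exist _ u Hu; pose S : Pres X R := exist _ s Hs.
  pose V : Pres X R := exist _ v Hv.
  gtr (f (gmul U V)); first exact: fS.
  gtr (gmul (f U) (f V)); first exact: Hf.2.
  gtr (gmul (f U) (gmul (f S) (f V))).
    exact: gmul_compat (geq_refl _) (gsym (mul_one_l _ (IHs Hs))).
  gtr (gmul (f U) (f (gmul S V))); first exact: gmul_compat (geq_refl _) (gsym (Hf.2 _ _)).
  gtr (f (gmul U (gmul S V))); first exact: gsym (Hf.2 _ _).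
  gtr (f (exist _ _ Husv)); [exact: fS | exact: IH].
- move=> w z Az Hz HKw IH H.
  pose g : Pres X R := exist _ w H.
  have Hp : onX X (wpow w (absz z)) := onX_wpow H.
  have E : Defs.geq (gexpn (f g) (absz z)) gone.
    gtr (f (gexpn g (absz z))); first exact: gsym (f_gexpn _ _).
    gtr (f (exist _ _ Hp)); [by apply: fS; rewrite sval_gexpn | exact: IH].
  apply: (HK Az); case: z Az Hz HKw IH Hp E => m _ _ _ _ _ E //=.
  exact: ginv_one.
- move=> x A0 Hx H; apply: (HK A0); exact: geq_refl.
Qed.

Lemma f_wcong p q : wcong R' p q ->
  forall a b, Defs.geq (f (pf (a ++ p ++ b))) (f (pf (a ++ q ++ b))).
Proof.
elim=> {p q}.
- move=> w a b; exact: geq_refl.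
- by move=> u v _ IH a b; apply: gsym.
- by move=> u v w _ IH1 _ IH2 a b; apply: geq_trans (IH1 a b) (IH2 a b).
- move=> u u' v v' _ IH1 _ IH2 a b.
  have -> : a ++ (u ++ v) ++ b = a ++ u ++ (v ++ b) by rewrite -catA.
  have -> : a ++ (u' ++ v') ++ b = (a ++ u') ++ v' ++ b by rewrite -!catA.
  apply: geq_trans (IH1 a (v ++ b)) _.
  have -> : a ++ u' ++ v ++ b = (a ++ u') ++ v ++ b by rewrite -catA.
  exact: IH2.
- move=> x b0 a b; apply: Hf.1; change (wcong R (fX X (a ++ [:: (x, b0); (x, ~~ b0)] ++ b)) (fX X (a ++ [::] ++ b))); rewrite !fX_cat fX_pair fX_nil.
  case: (Xb X x); last exact: wc_refl.
  exact: (wc_cat (wc_refl _ _) (wc_cat (wc_free R x b0) (wc_refl _ _))).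
- move=> r Hr a b.
  have HrX := HR'X Hr; have HrK := HR'1 Hr.
  pose FA := pf a; pose FB := pf b; pose RR : Pres X R := exist _ r HrX.
  gtr (f (gmul FA (gmul RR FB))).
    by apply: fS; rewrite /= !fX_cat (fX_id HrX).
  gtr (gmul (f FA) (f (gmul RR FB))); first exact: Hf.2.
  gtr (gmul (f FA) (gmul (f RR) (f FB))); first exact: gmul_compat (geq_refl _) (Hf.2 _ _).
  gtr (gmul (f FA) (f FB)); first exact: gmul_compat (geq_refl _) (mul_one_l _ (f_Kc HrK HrX)).
  gtr (f (gmul FA FB)); first exact: gsym (Hf.2 _ _).
  by apply: fS; rewrite /= !fX_cat.
Qed.

End Hom.

Lemma univ : is_univ_A_tf_quotient A (Pres X R) (Pres X R') (fun w : Pres X R => (w : Pres X R')).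
Proof.
split; first exact: atf_Pres.
split.
  split; last by move=> x y; apply: geq_refl.
  move=> x y; apply: wcong_mono => r Hr; apply: HR'2; exact: K_rel.
split; first by move=> y; exists y; apply: geq_refl.
move=> K f HK Hf; exists f; split; last by move=> g; apply: geq_refl.
split; last exact: Hf.2.
move=> x y H.
have := f_wcong Hf HK H [::] [::]; rewrite /= !cats0 => H2.
gtr (f (pf (sval x))); first by apply: (fS Hf); rewrite /= fX_id //; apply: svalP.
apply: geq_trans H2 _; by apply: (fS Hf); rewrite /= fX_id //; apply: svalP.
Qed.

End Univ.

Theorem proposition2p8 :
  exists P : prog,
  forall (eX : nat -> option nat) (eR : nat -> option word) (eA : nat -> option int),
    computable (fun n => pickle (eX n)) ->
    computable (fun n => pickle (eR n)) ->
    computable (fun n => pickle (eA n)) ->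
    (forall w, enum_set eR w -> onX (enum_set eX) w) ->
    exists eR' : nat -> option word,
      (forall n, peval (input_oracle eX eR eA) P [:: n] (pickle (eR' n))) /\
      (forall w, enum_set eR' w -> onX (enum_set eX) w) /\
      (forall w, enum_set eR w -> enum_set eR' w) /\
      is_univ_A_tf_quotient (enum_set eA)
        (Pres (enum_set eX) (enum_set eR)) (Pres (enum_set eX) (enum_set eR'))
        (fun w : Pres (enum_set eX) (enum_set eR) =>
           (w : Pres (enum_set eX) (enum_set eR'))).
Proof.
exists (compile 1 out_e) => eX eR eA _ _ _ HR.
exists (eRp eX eR eA); split; first exact: eRp_peval.
split; first by move=> w /eRp_sound HK; exact: (Kc_onX HR HK).
split; first by move=> w Hw; apply: eRp_complete; exact: K_rel.
apply: univ => //; [exact: eRp_sound | exact: eRp_complete].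
Qed.
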